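(* Let $X(t)$ satisfy (A1)–(A2) and $\mathbf v:\mathcal S_n\to\mathbb R^d$. Let $\mathbf m^{\mathbf v}=(\min_jv_1(j),\dots,\min_jv_d(j))$ and $\mathbf M^{\mathbf v}=(\max_jv_1(j),\dots,\max_jv_d(j))$. Then for all $i,k\in\mathcal S_n$, all $\varepsilon>0$, all $t\ge0$ and all $\mathbf x\in\mathbb R^d$, \[ \begin{aligned} \mathbb P\{X(t)=i,X(t+\varepsilon)=k\}\,F^{\mathbf v}_i(t,\mathbf x-\varepsilon\mathbf M^{\mathbf v}) &\le\mathbb P\{X(t)=i,X(t+\varepsilon)=k,\mathbf L^{\mathbf v}(t+\varepsilon)\le\mathbf x\}\,\mathbb P\{X(t)=i\}\\ &\le\mathbb P\{X(t)=i,X(t+\varepsilon)=k\}\,F^{\mathbf v}_i(t,\mathbf x-\varepsilon\mathbf m^{\mathbf v}), \end{aligned} \] where comparisons of vectors are componentwise.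
   Context: (A1): $\{X(t)\}_{t\ge0}$ is a regular jump Markov process on $(\Omega,\mathcal F,\mathbb P)$ with values in $\mathcal S_n=\{1,\dots,n\}$, right-continuous trajectories, and transition rates $q_{ij}(t)$: $\mathbb P\{X(t+h)=j\mid X(t)=i\}=q_{ij}(t)h+o(h)$ for $j\ne i$. (A2): $Q(t)=(q_{ij}(t))$ is conservative ($q_i(t):=-q_{ii}(t)=\sum_{j\ne i}q_{ij}(t)$), continuous and bounded on $[0,\infty)$, and for each $i$ either $q_i\equiv0$ or $q_i>0$ everywhere with $\int_0^\infty q_i=\infty$. $\mathbf L^{\mathbf v}(t)=\int_0^t\mathbf v(X(s))\,ds$ and $F^{\mathbf v}_k(t,\mathbf x)=\mathbb P\{X(t)=k,\ \mathbf L^{\mathbf v}(t)\le\mathbf x\}$ (componentwise). *)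

(* Defs.v *)
From HB Require Import structures.
From mathcomp Require Import all_boot all_order all_algebra.
From mathcomp Require Import all_classical all_reals all_analysis.
Set Implicit Arguments. Unset Strict Implicit. Unset Printing Implicit Defensive.
Import Order.TTheory GRing.Theory Num.Theory numFieldNormedType.Exports.
Local Open Scope classical_set_scope.
Local Open Scope ring_scope.

(* State space S_n = {1,...,n} is rendered as 'I_N (N = n, N >= 1 written N.+1
   in the theorem).  Time is R; only t >= 0 is relevant. *)

Definition occup (R : realType) (T : Type) (N d : nat)
  (v : 'I_N -> 'I_d -> R) (X : R -> T -> 'I_N) (t : R) (w : T) (l : 'I_d)
  : \bar R :=
  (\int[lebesgue_measure]_(s in `[0%R, t]) (v (X s w) l)%:E)%E.

Definition Lle (R : realType) (T : Type) (N d : nat)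
  (v : 'I_N -> 'I_d -> R) (X : R -> T -> 'I_N) (t : R) (w : T)
  (x : 'I_d -> R) : Prop :=
  forall l : 'I_d, (occup v X t w l <= (x l)%:E)%E.

Definition Fv (R : realType) (d0 : measure_display) (T : measurableType d0)
  (P : probability T R) (N d : nat) (v : 'I_N -> 'I_d -> R)
  (X : R -> T -> 'I_N) (k : 'I_N) (t : R) (x : 'I_d -> R) : \bar R :=
  P [set w | X t w = k /\ Lle v X t w x].

Definition mv (R : realType) (N d : nat) (v : 'I_N.+1 -> 'I_d -> R)
  (l : 'I_d) : R := \big[Order.min/v ord0 l]_(j < N.+1) v j l.
Definition Mv (R : realType) (N d : nat) (v : 'I_N.+1 -> 'I_d -> R)
  (l : 'I_d) : R := \big[Order.max/v ord0 l]_(j < N.+1) v j l.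

Definition nat_filt (R : realType) (T : Type) (N : nat)
  (X : R -> T -> 'I_N) (s : R) : set (set T) :=
  <<s [set A | exists (r : R) (j : 'I_N), 0 <= r <= s /\ A = [set w | X r w = j]] >>.

(* Trajectories are right-continuous, piecewise constant, with finitely many
   jumps on every bounded time interval (regular jump process): for every w and
   horizon Tm there are times 0 = tau_0 < tau_1 < ... < tau_m with tau_m > Tm
   such that X(., w) is constant on each [tau_j, tau_{j+1}). *)
Definition regular_jump_paths (R : realType) (T : Type) (N : nat)
  (X : R -> T -> 'I_N) : Prop :=
  forall (w : T) (Tm : R), exists taus : seq R,
    let s := 0 :: taus in
    [/\ sorted <%R s, Tm < last 0 s &
        forall j : nat, (j.+1 < size s)%N ->
          forall u : R, nth 0 s j <= u < nth 0 s j.+1 ->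
            X u w = X (nth 0 s j) w].

Definition A1 (R : realType) (d0 : measure_display) (T : measurableType d0)
  (P : probability T R) (N : nat) (X : R -> T -> 'I_N)
  (q : R -> 'I_N -> 'I_N -> R) : Prop :=
  [/\
      (forall t : R, 0 <= t -> forall j : 'I_N, measurable [set w | X t w = j]),
      regular_jump_paths X,
      (forall (s u : R), 0 <= s -> s <= u -> forall (i j : 'I_N) (A : set T),
          nat_filt X s A ->
          (P (A `&` [set w | X s w = i /\ X u w = j]) * P [set w | X s w = i]
           = P (A `&` [set w | X s w = i]) * P [set w | X s w = i /\ X u w = j])%E) &
      (* transition rates: P{X(t)=i, X(t+h)=j} = P{X(t)=i} (q_ij(t) h + o(h)),
         i.e. P{X(t+h)=j | X(t)=i} = q_ij(t) h + o(h), h -> 0+ *)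
      (forall t : R, 0 <= t -> forall i j : 'I_N, i != j ->
          (fun h : R => (fine (P [set w | X t w = i /\ X (t + h) w = j])
                         - fine (P [set w | X t w = i]) * (q t i j * h)) / h)
          @ 0^'+ --> (0 : R))].

Definition A2 (R : realType) (N : nat) (q : R -> 'I_N -> 'I_N -> R) : Prop :=
  [/\
      (forall t : R, 0 <= t -> forall i j : 'I_N, i != j -> 0 <= q t i j),
      (forall t : R, 0 <= t -> forall i : 'I_N,
          - q t i i = \sum_(j < N | j != i) q t i j),
      (forall i j : 'I_N, {within `[0, +oo[, continuous (fun t => q t i j)}),
      (exists B : R, forall t : R, 0 <= t -> forall i j : 'I_N, `|q t i j| <= B) &
      (forall i : 'I_N,
          (forall t : R, 0 <= t -> - q t i i = 0) \/
          ((forall t : R, 0 <= t -> 0 < - q t i i) /\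
           (\int[lebesgue_measure]_(t in `[0%R, +oo[%classic) (- q t i i)%:E)%E = +oo%E))].

(* Main.v *)
Require Import Defs.
From HB Require Import structures.
From mathcomp Require Import all_boot all_order all_algebra.
From mathcomp Require Import all_classical all_reals all_analysis.
From mathcomp Require Import measurable_realfun.
From mathcomp Require Import lra.
Import Order.TTheory GRing.Theory Num.Theory numFieldNormedType.Exports.
Local Open Scope classical_set_scope.
Local Open Scope ring_scope.
Set Implicit Arguments. Unset Strict Implicit. Unset Printing Implicit Defensive.

Lemma find_itv (R : realType) (l : seq R) (a s : R) : a <= s -> s < last a l ->
  exists j, (j.+1 < size (a :: l))%N /\ nth 0 (a :: l) j <= s < nth 0 (a :: l) j.+1.
Proof.
elim: l a => [|b l IH] a /= aS sl; first by move: (le_lt_trans aS sl); rewrite ltxx.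
have [sb|bs] := ltP s b; first by exists 0%N; rewrite aS sb.
have [j [Hj Hs]] := IH b bs sl.
by exists j.+1.
Qed.

Lemma right_const (R : realType) (T : Type) (N : nat) (X : R -> T -> 'I_N) (w : T) (s : R) :
  regular_jump_paths X -> 0 <= s ->
  exists2 r : R, 0 < r & forall u, s <= u < s + r -> X u w = X s w.
Proof.
move=> H s0; have [taus [_ Hl Hc]] := H w s.
have [[|j] [Hj /andP[a1 a2]]] := find_itv s0 Hl.
  by move: (le_lt_trans a1 a2); rewrite ltxx.
rewrite /= in Hj a1 a2.
exists (nth 0 (0 :: taus) j.+1 - s); first by rewrite subr_gt0 a2.
move=> u /andP[su us]; rewrite addrC subrK in us.
rewrite (Hc j Hj u); last by rewrite (le_trans a1 su) us.
by rewrite (Hc j Hj s) // a1 a2.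
Qed.
Lemma indic_itv (R : realType) (a b s : R) :
  \1_(`]a, b]%classic) s = ((a < s) && (s <= b))%:R :> R.
Proof.
rewrite indicE; have [H|H] := boolP ((a < s) && (s <= b)).
  by rewrite mem_set //= in_itv /= H.
by rewrite memNset //= in_itv /=; apply/negP.
Qed.

Lemma sum_cells (R : realType) (dl s : R) (K : nat) : 0 <= dl ->
  \sum_(j < K) \1_(`](j%:R * dl), (j.+1%:R * dl)]%classic) s
  = ((0 < s) && (s <= K%:R * dl))%:R :> R.
Proof.
move=> d0; elim: K => [|K IH].
  by rewrite big_ord0 mul0r; case: ltP.
rewrite big_ord_recr /= IH indic_itv.
have [sK|Ks] := leP s (K%:R * dl).
  rewrite andbT andFb addr0 (le_trans sK) ?andbT //.
  by rewrite ler_wpM2r // ler_nat.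
by rewrite andbF add0r /= (le_lt_trans _ Ks) // mulr_ge0.
Qed.

Definition grid (R : realType) (t : R) (m j : nat) : R := j%:R * (t / m.+1%:R).

Definition hap (R : realType) (T : Type) (N d : nat) (v : 'I_N -> 'I_d -> R)
  (X : R -> T -> 'I_N) (t : R) (l : 'I_d) (m : nat) (w : T) (s : R) : R :=
  \sum_(j < m.+1) \1_(`]grid t m j, grid t m j.+1]%classic) s
                  * v (X (grid t m j.+1) w) l.

Lemma grid_end (R : realType) (t : R) m : grid t m m.+1 = t.
Proof. by rewrite /grid mulrC divfK // pnatr_eq0. Qed.

Lemma hap_meas (R : realType) (T : Type) (N d : nat) (v : 'I_N -> 'I_d -> R)
  (X : R -> T -> 'I_N) (t : R) (l : 'I_d) (m : nat) (w : T) (D : set R) :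
  measurable_fun D (hap v X t l m w).
Proof.
apply: measurable_sum => j; apply: measurable_realfun.measurable_funM; last exact: measurable_cst.
apply: measurable_realfun.measurable_indic; exact: measurable_itv.
Qed.

Lemma hap_bound (R : realType) (T : Type) (N d : nat) (v : 'I_N -> 'I_d -> R)
  (X : R -> T -> 'I_N) (t : R) (l : 'I_d) (m : nat) (w : T) (s : R) :
  0 <= t -> `|hap v X t l m w s| <= \sum_(a < N) `|v a l|.
Proof.
move=> t0; rewrite /hap.
have vb : forall a, `|v a l| <= \sum_(b < N) `|v b l|.
  by move=> a; rewrite (bigD1 a) //= lerDl sumr_ge0.
apply: (le_trans (ler_norm_sum _ _ _)).
apply: (@le_trans _ _ (\sum_(j < m.+1) \1_(`]grid t m j, grid t m j.+1]%classic) s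
   * \sum_(b < N) `|v b l|)).
  apply: ler_sum => j _; rewrite normrM ger0_norm ?indicE //.
  by apply: ler_wpM2l => //.
rewrite -mulr_suml /grid sum_cells; last by rewrite divr_ge0.
by case: (_ && _); rewrite ?mul1r ?mul0r ?sumr_ge0.
Qed.

Lemma hap_near (R : realType) (T : Type) (N d : nat) (v : 'I_N -> 'I_d -> R)
  (X : R -> T -> 'I_N) (t : R) (l : 'I_d) (w : T) (s : R) :
  regular_jump_paths X -> 0 < s <= t ->
  \forall m \near \oo, hap v X t l m w s = v (X s w) l.
Proof.
move=> H /andP[s0 st].
have [r r0 Hr] := right_const w H (ltW s0).
have t0 : 0 < t by exact: lt_le_trans st.
exists (Num.bound (t / r)) => // m /= Nm.
have dl0 : 0 < t / m.+1%:R by rewrite divr_gt0.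
have dlr : t / m.+1%:R < r.
  rewrite ltr_pdivrMr // mulrC -ltr_pdivrMr //.
  apply: (lt_le_trans (archi_boundP _)); first by rewrite divr_ge0 // ltW.
  by rewrite ler_nat; apply: (leq_trans Nm).
rewrite /hap.
transitivity (\sum_(j < m.+1) \1_(`]grid t m j, grid t m j.+1]%classic) s * v (X s w) l).
  apply: eq_bigr => j _; rewrite indic_itv.
  case: andP => [[a1 a2]|_]; last by rewrite !mul0r.
  rewrite Hr //.
  rewrite a2 /=.
  have -> : grid t m j.+1 = grid t m j + t / m.+1%:R.
    by rewrite /grid -natr1 mulrDl mul1r.
  by rewrite ltrD.
rewrite -mulr_suml /grid sum_cells; last by rewrite ltW.
by rewrite s0 -/(grid t m m.+1) grid_end st mul1r.
Qed.

Lemma occup_cvg (R : realType) (T : Type) (N d : nat) (v : 'I_N -> 'I_d -> R)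
  (X : R -> T -> 'I_N) (t : R) (l : 'I_d) (w : T) :
  regular_jump_paths X -> 0 <= t ->
  measurable_fun `]0%R, t]%classic (EFin \o (fun s => v (X s w) l)) /\
  (fun m => (\int[lebesgue_measure]_(s in `]0%R, t]%classic) (hap v X t l m w s)%:E)%E)
     @ \oo --> occup v X t w l.
Proof.
move=> H t0.
have mg : measurable_fun `]0%R, t]%classic (fun s => v (X s w) l).
  apply: (measurable_fun_cvg (h := fun m => hap v X t l m w)).
    by move=> m; exact: hap_meas.
  move=> s; rewrite /= in_itv /= => Hs.
  by apply: cvg_near_cst; exact: hap_near.
have mgE : measurable_fun `]0%R, t]%classic (EFin \o (fun s => v (X s w) l)).
  exact/measurable_EFinP.
split => //.
rewrite /occup -integral_itv_obnd_cbnd //.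
apply: (@dominated_cvg _ _ _ lebesgue_measure _ (measurable_itv _) _ _
   (fun _ => (\sum_(a < N) `|v a l|)%:E)).
- by move=> m; apply/measurable_EFinP; exact: hap_meas.
- move=> s; rewrite /= in_itv /= => Hs.
  apply: cvg_near_cst; have := hap_near v l w H Hs.
  by apply: filterS => m ->.
- by [].
- apply: (measurable_bounded_integrable (f := cst (\sum_(a < N) `|v a l|))).
  + exact: measurable_itv.
  + suff: (lebesgue_measure (`]0%R, t]%classic : set R) < +oo)%E by [].
    by rewrite lebesgue_measure_itv /=; case: ifP => _; rewrite ?ltry.
  + exact: measurable_cst.
  + exact: bounded_cst.
- by move=> m s _; rewrite /= lee_fin hap_bound.
Qed.

Definition Gset (R : realType) (T : Type) (N : nat) (X : R -> T -> 'I_N) (s : R)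
  : set (set T) :=
  [set A | exists (r : R) (j : 'I_N), 0 <= r <= s /\ A = [set w | X r w = j]].

Lemma fin_meas (R : realType) (T : pointedType) (G : set (set T)) (K : finType)
  (phi : T -> K) (F : K -> \bar R) :
  (forall a, <<s G >> [set w | phi w = a]) ->
  measurable_fun (setT : set (g_sigma_algebraType G)) (F \o phi).
Proof.
move=> Hf _ Y mY; rewrite setTI.
have -> : (F \o phi) @^-1` Y = \bigcup_(a in [set a | Y (F a)]) [set w | phi w = a].
  apply/seteqP; split => [w /= Yw|w [a /= Ya Ha]]; last by rewrite /= Ha.
  by exists (phi w).
apply: fin_bigcup_measurable; first exact: finite_finset.
by move=> a _; exact: Hf.
Qed.

Lemma W_meas (R : realType) (T : pointedType) (N d : nat) (v : 'I_N -> 'I_d -> R)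
  (X : R -> T -> 'I_N) (t : R) (l : 'I_d) (m : nat) : 0 <= t ->
  measurable_fun (setT : set (g_sigma_algebraType (Gset X t)))
    (fun w => (\int[lebesgue_measure]_(s in `]0%R, t]%classic) (hap v X t l m w s)%:E)%E).
Proof.
move=> t0.
pose phi (w : T) := [ffun j : 'I_m.+1 => X (grid t m j.+1) w].
pose F (a : {ffun 'I_m.+1 -> 'I_N}) := (\int[lebesgue_measure]_(s in `]0%R, t]%classic)
   (\sum_(j < m.+1) \1_(`]grid t m j, grid t m j.+1]%classic) s * v (a j) l)%:E)%E.
have -> : (fun w => (\int[lebesgue_measure]_(s in `]0%R, t]%classic) (hap v X t l m w s)%:E)%E)
   = F \o phi.
  apply/funext => w /=; rewrite /F; apply: eq_integral => s _.
  by rewrite /hap; congr (_%:E); apply: eq_bigr => j _; rewrite ffunE.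
apply: fin_meas => a.
have -> : [set w | phi w = a] =
    \big[setI/setT]_(j < m.+1) [set w | X (grid t m j.+1) w = a j].
  apply/seteqP; split => [w /= <-|w /= Hw].
    by rewrite -bigcap_seq; move=> j _; rewrite /= ffunE.
  apply/ffunP => j; rewrite ffunE.
  move: Hw; rewrite -bigcap_seq => /= /(_ j); apply; by rewrite /= mem_index_enum.
apply: (@bigsetI_measurable _ (g_sigma_algebraType (Gset X t))) => j _.
apply: sub_gen_smallest; exists (grid t m j.+1), (a j); split => //.
rewrite /grid mulr_ge0 ?divr_ge0 //=.
rewrite -[leRHS](grid_end t m) /grid ler_wpM2r ?divr_ge0 // ler_nat.
by have := ltn_ord j.
Qed.

Lemma Lle_filt (R : realType) (T : pointedType) (N d : nat) (v : 'I_N -> 'I_d -> R)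
  (X : R -> T -> 'I_N) (t : R) (y : 'I_d -> R) :
  regular_jump_paths X -> 0 <= t -> <<s Gset X t >> [set w | Lle v X t w y].
Proof.
move=> H t0.
have mo l : measurable_fun (setT : set (g_sigma_algebraType (Gset X t)))
    (fun w => occup v X t w l).
  apply: (@emeasurable_fun_cvg _ (g_sigma_algebraType (Gset X t)) R setT (fun m w =>
    (\int[lebesgue_measure]_(s in `]0%R, t]%classic) (hap v X t l m w s)%:E)%E)).
    by move=> m; exact: W_meas.
  by move=> w _; have [_ Hc] := occup_cvg v l w H t0; exact: Hc.
have -> : [set w | Lle v X t w y] = \big[setI/setT]_(l < d)
    ((fun w => occup v X t w l) @^-1` [set` `]-oo, (y l)%:E]%O]).
  apply/seteqP; split => [w /= Hw|w /= Hw].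
    rewrite -bigcap_seq => l _ /=; rewrite in_itv /=; exact: Hw.
  move=> l; move: Hw; rewrite -bigcap_seq => /= /(_ l).
  by rewrite /= mem_index_enum in_itv /= => /(_ isT).
apply: (@bigsetI_measurable _ (g_sigma_algebraType (Gset X t))) => l _.
have := mo l measurableT _ (emeasurable_itv `]-oo, (y l)%:E]).
by rewrite setTI.
Qed.

Lemma vbounds (R : realType) (N d : nat) (v : 'I_N.+1 -> 'I_d -> R) (l : 'I_d) j :
  mv v l <= v j l <= Mv v l.
Proof. by rewrite /mv /Mv bigmin_le le_bigmax. Qed.

Lemma occup_split (R : realType) (T : Type) (N d : nat) (v : 'I_N.+1 -> 'I_d -> R)
  (X : R -> T -> 'I_N.+1) (t eps : R) (w : T) (l : 'I_d) :
  regular_jump_paths X -> 0 <= t -> 0 < eps ->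
  exists I : R, occup v X (t + eps) w l = (occup v X t w l + I%:E)%E /\
                eps * mv v l <= I <= eps * Mv v l.
Proof.
move=> H t0 e0.
have te0 : 0 <= t + eps by rewrite addr_ge0 // ltW.
have [mg _] := occup_cvg v l w H te0.
have mgc : measurable_fun `[0%R, t + eps]%classic (EFin \o (fun s => v (X s w) l)).
  exact/emeasurable_fun_itv_obnd_cbndP.
have mgI : measurable_fun `]t, t + eps]%classic (EFin \o (fun s => v (X s w) l)).
  apply: (measurable_funS (measurable_itv _) _ mg).
  move=> s; rewrite /= !in_itv /=; move=> /andP[ts ->]; rewrite andbT.
  exact: le_lt_trans ts.
have leb : lebesgue_measure (`]t, t + eps]%classic : set R) = eps%:E.
  by rewrite lebesgue_measure_itv /= lte_fin ltrDl e0 -EFinB addrC addKr.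
have lebf : (lebesgue_measure (`]t%R, (t + eps)%R]%classic : set R) < +oo)%E.
  by rewrite leb ltry.
have intc (c : R) : lebesgue_measure.-integrable `]t, t + eps]%classic (EFin \o cst c).
  apply: measurable_bounded_integrable.
  - exact: measurable_itv.
  - exact: lebf.
  - exact: measurable_cst.
  - exact: bounded_cst.
have intg : lebesgue_measure.-integrable `]t, t + eps]%classic
    (EFin \o (fun s => v (X s w) l)).
  apply: measurable_bounded_integrable.
  - exact: measurable_itv.
  - exact: lebf.
  - exact/measurable_EFinP.
  - rewrite /bounded_near; near=> M => s _ /=.
    have /andP[a1 a2] := vbounds v l (X s w).
    apply: (@le_trans _ _ (`|mv v l| + `|Mv v l|)).
      have h1 := ler_norm (mv v l); have h2 := ler_norm (- mv v l).
      have h3 := ler_norm (Mv v l); have h4 := ler_norm (- Mv v l).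
      have h5 := normr_ge0 (mv v l); have h6 := normr_ge0 (Mv v l).
      rewrite normrN in h2 h4; rewrite ler_norml; apply/andP; split; lra.
    by near: M; exact: nbhs_pinfty_ge.
have E : `[0%R, t + eps]%classic = `[0%R, t]%classic `|` `]t, t + eps]%classic.
  by apply: itv_bndbnd_setU; rewrite bnd_simp // lerDl ltW.
have cE (c : R) : (\int[lebesgue_measure]_(s in `]t%R, (t + eps)%R]%classic)
    (EFin \o cst c) s)%E = (c * eps)%:E.
  rewrite (_ : EFin \o cst c = cst c%:E) //.
  transitivity (c%:E * eps%:E)%E; last by rewrite EFinM.
  rewrite integral_cst; last exact: measurable_itv.
  by congr (_ * _)%E; exact: leb.
set J := (\int[lebesgue_measure]_(s in `]t%R, (t + eps)%R]%classic)
    (EFin \o (fun s => v (X s w) l)) s)%E.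
have lo : ((mv v l * eps)%:E <= J)%E.
  rewrite -cE; apply: (le_integral _ (intc (mv v l)) intg); first exact: measurable_itv.
  by move=> s _ /=; rewrite lee_fin; case/andP: (vbounds v l (X s w)).
have hi : (J <= (Mv v l * eps)%:E)%E.
  rewrite -cE; apply: (le_integral _ intg (intc (Mv v l))); first exact: measurable_itv.
  by move=> s _ /=; rewrite lee_fin; case/andP: (vbounds v l (X s w)).
have Jfin : J \is a fin_num.
  by rewrite fin_numElt (lt_le_trans _ lo) ?ltNyr // (le_lt_trans hi) ?ltry.
exists (fine J); split.
  rewrite fineK // /occup E integral_setU //.
    by rewrite -E; exact: mgc.
  apply/disj_setPS => s [] /=; rewrite !in_itv /= => /andP[_ st] /andP[ts _].
  by move: (lt_le_trans ts st); rewrite ltxx.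
apply/andP; split; rewrite -lee_fin fineK // mulrC; [exact: lo | exact: hi].
Unshelve. all: end_near.
Qed.

Theorem lemma3 (R : realType) (d0 : measure_display) (T : measurableType d0)
  (P : probability T R) (n d : nat) (X : R -> T -> 'I_n.+1)
  (q : R -> 'I_n.+1 -> 'I_n.+1 -> R) (v : 'I_n.+1 -> 'I_d -> R) :
  A1 P X q -> A2 q ->
  forall (i k : 'I_n.+1) (eps t : R) (x : 'I_d -> R), 0 < eps -> 0 <= t ->
  (P [set w | X t w = i /\ X (t + eps)%R w = k]
     * Fv P v X i t (fun l => (x l - eps * Mv v l)%R)
   <= P [set w | X t w = i /\ X (t + eps)%R w = k /\ Lle v X (t + eps)%R w x]
        * P [set w | X t w = i])%E /\
  (P [set w | X t w = i /\ X (t + eps)%R w = k /\ Lle v X (t + eps)%R w x]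
        * P [set w | X t w = i]
   <= P [set w | X t w = i /\ X (t + eps)%R w = k]
        * Fv P v X i t (fun l => (x l - eps * mv v l)%R))%E.
Proof.
move=> [Hmeas Hreg Hmk _] _ i k eps t x e0 t0.
have te0 : 0 <= t + eps by rewrite addr_ge0 // ltW.
have gsub s : 0 <= s -> <<s Gset X s >> `<=` measurable.
  move=> s0; apply: smallest_sub; first exact: sigma_algebra_measurable.
  by move=> A [r [j [/andP[r0 _] ->]]]; exact: Hmeas.
pose Ay y := [set w | X t w = i /\ Lle v X t w y].
have mAy y : <<s Gset X t >> (Ay y).
  have -> : Ay y = [set w | X t w = i] `&` [set w | Lle v X t w y].
    by apply/seteqP; split.
  apply: (@measurableI _ (g_sigma_algebraType (Gset X t))).
    by apply: sub_gen_smallest; exists t, i; split => //; rewrite t0 lexx.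
  exact: Lle_filt.
have Bm : measurable [set w | X t w = i /\ X (t + eps) w = k].
  have -> : [set w | X t w = i /\ X (t + eps) w = k] =
      [set w | X t w = i] `&` [set w | X (t + eps) w = k].
    by apply/seteqP; split.
  by apply: measurableI; apply: Hmeas.
have Cm : measurable [set w | X t w = i /\ X (t + eps)%R w = k /\ Lle v X (t + eps)%R w x].
  have -> : [set w | X t w = i /\ X (t + eps)%R w = k /\ Lle v X (t + eps)%R w x] =
      [set w | X t w = i] `&` ([set w | X (t + eps) w = k] `&` [set w | Lle v X (t + eps)%R w x]).
    by apply/seteqP; split.
  apply: measurableI; first exact: Hmeas.
  apply: measurableI; first exact: Hmeas.
  by apply: (gsub _ te0); exact: Lle_filt.
have ABm y : measurable (Ay y `&` [set w | X t w = i /\ X (t + eps) w = k]).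
  by apply: measurableI => //; exact: (gsub _ t0).
have key y : (P [set w | X t w = i /\ X (t + eps)%R w = k] * Fv P v X i t y
    = P (Ay y `&` [set w | X t w = i /\ X (t + eps)%R w = k]) * P [set w | X t w = i])%E.
  have := Hmk t (t + eps) t0 _ i k (Ay y) (mAy y).
  rewrite lerDl ltW // => /(_ isT) ->.
  have -> : Ay y `&` [set w | X t w = i] = Ay y.
    by apply/seteqP; split => [w []|w [H1 H2]].
  by rewrite muleC.
have Pi0 : (0 <= P [set w | X t w = i])%E by exact: measure_ge0.
split.
- rewrite key; apply: lee_wpmul2r => //; apply: le_measure; rewrite ?inE //.
  move=> w [[Xi Ly] [_ Xk]]; split => //; split => // l.
  have [I [-> /andP[_ Ih]]] := occup_split v w l Hreg t0 e0.
  apply: (le_trans (leeD (Ly l) (_ : I%:E <= (eps * Mv v l)%:E)%E)).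
    by rewrite lee_fin.
  by rewrite -EFinD subrK.
- rewrite key; apply: lee_wpmul2r => //; apply: le_measure; rewrite ?inE //.
  move=> w [Xi [Xk Lx]]; split => //; split => // l.
  have [I [E /andP[Il _]]] := occup_split v w l Hreg t0 e0.
  have := Lx l; rewrite E => H.
  have : (occup v X t w l <= (x l - I)%:E)%E by rewrite EFinB leeBrDr.
  move/le_trans; apply; rewrite lee_fin lerD2l lerN2 //.
Qed.
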